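(* Let H be the Hilbert calculus LFI3 extended with the axiom schema (cc) $\circ\circ\alpha$. Then for every set of formulas $\Gamma$ and formula $\alpha$, $\Gamma\vdash_{H}\alpha$ if and only if $\Gamma\vDash_{LFI1}\alpha$; i.e. LFI1 = LFI3 + (cc).
   Context: Formulas are built from a countable set of propositional variables using unary $\neg,\circ$ and binary $\land,\lor,\to$; $\alpha\leftrightarrow\beta:=(\alpha\to\beta)\land(\beta\to\alpha)$, $\sim\alpha:=\neg\alpha\land\circ\alpha$. mbC is the Hilbert calculus with the axiom schemas of a standard axiomatization of positive classical propositional logic in $\land,\lor,\to$, plus $\alpha\lor\neg\alpha$ and $\circ\alpha\to(\alpha\to(\neg\alpha\to\beta))$, with modus ponens as only rule. The Hilbert calculus LFI3 is mbC plus the schemas $\circ\alpha\lor(\alpha\land\neg\alpha)$, $\circ\circ\circ\alpha$, $\neg\neg\alpha\to\alpha$, $\alpha\to\neg\neg\alpha$, $\neg\circ\neg\alpha\leftrightarrow\neg\circ\alpha$, and: A1 $\neg(\alpha\land\beta)\leftrightarrow(\neg\alpha\lor\neg\beta)$; A2 $\neg(\alpha\lor\beta)\leftrightarrow(\neg\alpha\land\neg\beta)$; A3 $\neg(\alpha\to\beta)\leftrightarrow(\neg\beta\land(\sim\neg\alpha\lor\neg\circ\alpha))$; A4 $\neg\circ(\alpha\land\beta)\leftrightarrow(((\sim\neg\alpha\land\neg\circ\beta)\lor(\neg\circ\alpha\land\sim\neg\beta))\lor(\neg\circ\alpha\land\neg\circ\beta))$; A5 $\neg\circ(\alpha\lor\beta)\leftrightarrow(((\sim\alpha\land\neg\circ\beta)\lor(\neg\circ\alpha\land\sim\beta))\lor(\neg\circ\alpha\land\neg\circ\beta))$;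 A6 $\neg\circ(\alpha\to\beta)\leftrightarrow((\sim\neg\alpha\land\neg\circ\beta)\lor(\sim\neg\alpha\land\neg\circ\alpha\land\sim\beta)\lor(\neg\circ\alpha\land\neg\circ\beta)\lor(\sim\alpha\land\neg\circ\alpha\land\sim\beta))$. LFI1 is the three-valued matrix logic on $\{1,\frac12,0\}$ with designated set $\{1,\frac12\}$, $\land=\min$, $\lor=\max$ (order $0<\frac12<1$), $a\to c=1$ if $a=0$ and $a\to c=c$ otherwise, $\neg1=0$, $\neg\frac12=\frac12$, $\neg0=1$, $\circ1=\circ0=1$, $\circ\frac12=0$; $\Gamma\vDash_{LFI1}\alpha$ iff every homomorphic valuation designating all of $\Gamma$ designates $\alpha$. *)

(* Defs.v *)
Inductive formula : Type :=
| Var  : nat -> formula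
| Neg  : formula -> formula
| Circ : formula -> formula
| And  : formula -> formula -> formula
| Or   : formula -> formula -> formula
| Imp  : formula -> formula -> formula.

Definition Iff (a b : formula) : formula := And (Imp a b) (Imp b a).
Definition Sim (a : formula) : formula := And (Neg a) (Circ a).

(** Axiom schemas of mbC: the standard positive classical axioms
    (Carnielli–Coniglio–Marcos Ax1–Ax9), plus α∨¬α and (bc1). *)
Inductive mbC_axiom : formula -> Prop :=
| Ax1 a b : mbC_axiom (Imp a (Imp b a))
| Ax2 a b c : mbC_axiom (Imp (Imp a b) (Imp (Imp a (Imp b c)) (Imp a c)))
| Ax3 a b : mbC_axiom (Imp a (Imp b (And a b)))
| Ax4 a b : mbC_axiom (Imp (And a b) a)
| Ax5 a b : mbC_axiom (Imp (And a b) b)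
| Ax6 a b : mbC_axiom (Imp a (Or a b))
| Ax7 a b : mbC_axiom (Imp b (Or a b))
| Ax8 a b c : mbC_axiom (Imp (Imp a c) (Imp (Imp b c) (Imp (Or a b) c)))
| Ax9 a b : mbC_axiom (Or a (Imp a b))
| Ax10 a : mbC_axiom (Or a (Neg a))
| bc1 a b : mbC_axiom (Imp (Circ a) (Imp a (Imp (Neg a) b))).

(** Additional axiom schemas of LFI3. Iterated ∧/∨ are associated to the left. *)
Inductive LFI3_extra_axiom : formula -> Prop :=
| ci_or a : LFI3_extra_axiom (Or (Circ a) (And a (Neg a)))
| ccc a : LFI3_extra_axiom (Circ (Circ (Circ a)))
| cf a : LFI3_extra_axiom (Imp (Neg (Neg a)) a)
| ce a : LFI3_extra_axiom (Imp a (Neg (Neg a)))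
| negcircneg a : LFI3_extra_axiom (Iff (Neg (Circ (Neg a))) (Neg (Circ a)))
| A1 a b : LFI3_extra_axiom (Iff (Neg (And a b)) (Or (Neg a) (Neg b)))
| A2 a b : LFI3_extra_axiom (Iff (Neg (Or a b)) (And (Neg a) (Neg b)))
| A3 a b : LFI3_extra_axiom
    (Iff (Neg (Imp a b)) (And (Neg b) (Or (Sim (Neg a)) (Neg (Circ a)))))
| A4 a b : LFI3_extra_axiom
    (Iff (Neg (Circ (And a b)))
         (Or (Or (And (Sim (Neg a)) (Neg (Circ b)))
                 (And (Neg (Circ a)) (Sim (Neg b))))
             (And (Neg (Circ a)) (Neg (Circ b)))))
| A5 a b : LFI3_extra_axiom
    (Iff (Neg (Circ (Or a b)))
         (Or (Or (And (Sim a) (Neg (Circ b)))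
                 (And (Neg (Circ a)) (Sim b)))
             (And (Neg (Circ a)) (Neg (Circ b)))))
| A6 a b : LFI3_extra_axiom
    (Iff (Neg (Circ (Imp a b)))
         (Or (Or (Or (And (Sim (Neg a)) (Neg (Circ b)))
                     (And (And (Sim (Neg a)) (Neg (Circ a))) (Sim b)))
                 (And (Neg (Circ a)) (Neg (Circ b))))
             (And (And (Sim a) (Neg (Circ a))) (Sim b)))).

Inductive cc_axiom : formula -> Prop :=
| cc a : cc_axiom (Circ (Circ a)).

Definition H_axiom (f : formula) : Prop :=
  mbC_axiom f \/ LFI3_extra_axiom f \/ cc_axiom f.

Inductive H_derivable (Gamma : formula -> Prop) : formula -> Prop :=
| d_prem f : Gamma f -> H_derivable Gamma f
| d_ax f : H_axiom f -> H_derivable Gamma f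
| d_mp a b : H_derivable Gamma a -> H_derivable Gamma (Imp a b) ->
             H_derivable Gamma b.

Inductive V3 : Type := V1 | Vhalf | V0.

Definition rank (x : V3) : nat := match x with V0 => 0 | Vhalf => 1 | V1 => 2 end.

Definition and3 (x y : V3) : V3 := if Nat.leb (rank x) (rank y) then x else y.
Definition or3 (x y : V3) : V3 := if Nat.leb (rank x) (rank y) then y else x.
Definition imp3 (x y : V3) : V3 := match x with V0 => V1 | _ => y end.
Definition neg3 (x : V3) : V3 := match x with V1 => V0 | Vhalf => Vhalf | V0 => V1 end.
Definition circ3 (x : V3) : V3 := match x with Vhalf => V0 | _ => V1 end.

Definition designated (x : V3) : Prop := x = V1 \/ x = Vhalf.

Fixpoint eval (v : nat -> V3) (f : formula) : V3 :=
  match f with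
  | Var n => v n
  | Neg a => neg3 (eval v a)
  | Circ a => circ3 (eval v a)
  | And a b => and3 (eval v a) (eval v b)
  | Or a b => or3 (eval v a) (eval v b)
  | Imp a b => imp3 (eval v a) (eval v b)
  end.

Definition LFI1_consequence (Gamma : formula -> Prop) (a : formula) : Prop :=
  forall v : nat -> V3,
    (forall g, Gamma g -> designated (eval v g)) -> designated (eval v a).

(* Main.v *)
Require Import Defs.
From Stdlib Require Import Classical ClassicalEpsilon Arith Lia Cantor.

Ltac crush v :=
  repeat match goal with |- context[eval v ?x] => destruct (eval v x) end;
  simpl; unfold designated; first [left; reflexivity | right; reflexivity].

Lemma axiom_sound f v : H_axiom f -> designated (eval v f).
Proof.
  intros [H|[H|H]]; destruct H; unfold Iff, Sim; simpl; crush v.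
Qed.

Lemma soundness G f : H_derivable G f -> LFI1_consequence G f.
Proof.
  intros H v Hv. induction H as [f Hf|f Hf|p q H1 IH1 H2 IH2].
  - apply Hv; auto.
  - apply axiom_sound; auto.
  - simpl in IH2. destruct (eval v p); simpl in *; auto;
    destruct IH1 as [E|E]; discriminate.
Qed.

Lemma dmbc G f : mbC_axiom f -> H_derivable G f.
Proof. intros; apply d_ax; left; auto. Qed.
Lemma dext G f : LFI3_extra_axiom f -> H_derivable G f.
Proof. intros; apply d_ax; right; left; auto. Qed.
Lemma dcc G f : cc_axiom f -> H_derivable G f.
Proof. intros; apply d_ax; right; right; auto. Qed.

Lemma mono (G G' : formula -> Prop) f :
  (forall g, G g -> G' g) -> H_derivable G f -> H_derivable G' f.
Proof.
  intros S H; induction H as [g Hg|g Hg|p q H1 IH1 H2 IH2].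
  - apply d_prem; auto.
  - apply d_ax; auto.
  - exact (d_mp _ _ _ IH1 IH2).
Qed.

Lemma mp2 G a b c : H_derivable G a -> H_derivable G b ->
  H_derivable G (Imp a (Imp b c)) -> H_derivable G c.
Proof. intros. eapply d_mp; [|eapply d_mp; [|eauto]]; eauto. Qed.

Lemma ident G b : H_derivable G (Imp b b).
Proof.
  eapply mp2. apply dmbc, (Ax1 b b). apply dmbc, (Ax1 b (Imp b b)).
  apply dmbc, Ax2.
Qed.

Lemma deduction G b c :
  H_derivable (fun g => G g \/ g = b) c -> H_derivable G (Imp b c).
Proof.
  intro H; induction H as [g Hg|g Hg|p q H1 IH1 H2 IH2].
  - destruct Hg as [Hg|Hg].
    + eapply d_mp. apply d_prem; eauto. apply dmbc, Ax1.
    + subst; apply ident.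
  - eapply d_mp. apply d_ax; eauto. apply dmbc, Ax1.
  - eapply mp2; [exact IH1 | exact IH2 | apply dmbc, Ax2].
Qed.

Fixpoint code (f : formula) : nat :=
  match f with
  | Var n => to_nat (0, n)
  | Neg a => to_nat (1, code a)
  | Circ a => to_nat (2, code a)
  | And a b => to_nat (3, to_nat (code a, code b))
  | Or a b => to_nat (4, to_nat (code a, code b))
  | Imp a b => to_nat (5, to_nat (code a, code b))
  end.

Lemma to_nat_inj p q : to_nat p = to_nat q -> p = q.
Proof.
  intro E. rewrite <- (cancel_of_to p), <- (cancel_of_to q), E. reflexivity.
Qed.

Lemma pinj x y x' y' : to_nat (x, y) = to_nat (x', y') -> x = x' /\ y = y'.
Proof. intro E. apply to_nat_inj in E. injection E. auto. Qed.

Lemma code_inj f g : code f = code g -> f = g.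
Proof.
  revert g; induction f; destruct g; cbn [code]; intro E;
  apply pinj in E; destruct E as [E1 E2]; try discriminate;
  try (apply pinj in E2; destruct E2 as [E2 E3]); f_equal; auto.
Qed.

Fixpoint D (G : formula -> Prop) (a : formula) (n : nat) : formula -> Prop :=
  match n with
  | 0 => G
  | S n => fun f => D G a n f \/
      (code f = n /\ ~ H_derivable (fun g => D G a n g \/ g = f) a)
  end.

Definition Delta G a f := exists n, D G a n f.

Lemma D_mono G a n m f : n <= m -> D G a n f -> D G a m f.
Proof.
  induction 1; auto. intro; simpl; left; auto.
Qed.

Lemma D_cons G a n : ~ H_derivable G a -> ~ H_derivable (D G a n) a.
Proof.
  intro H0; induction n; simpl; auto.
  intro Hd.
  destruct (classic (exists g, code g = n /\
       ~ H_derivable (fun h => D G a n h \/ h = g) a)) as [[g [Hg1 Hg2]]|Hno].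
  - apply Hg2. eapply mono; [|exact Hd]. simpl.
    intros h [Hh|[Hh1 _]]; auto. right. apply code_inj; congruence.
  - apply IHn. eapply mono; [|exact Hd]. simpl.
    intros h [Hh|[Hh1 Hh2]]; auto. exfalso; apply Hno; eauto.
Qed.

Lemma Delta_fin G a f : H_derivable (Delta G a) f -> exists n, H_derivable (D G a n) f.
Proof.
  intro H; induction H as [g Hg|g Hg|p q H1' IH1 H2' IH2].
  - destruct Hg as [n Hn]. exists n; apply d_prem; auto.
  - exists 0; apply d_ax; auto.
  - destruct IH1 as [n1 H1], IH2 as [n2 H2]. exists (max n1 n2).
    apply (d_mp _ p q).
    + eapply mono; [|exact H1]. intros g Hg. apply (D_mono G a n1); [lia|auto].
    + eapply mono; [|exact H2]. intros g Hg. apply (D_mono G a n2); [lia|auto].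
Qed.

Lemma Delta_cons G a : ~ H_derivable G a -> ~ H_derivable (Delta G a) a.
Proof.
  intros H0 H. destruct (Delta_fin _ _ _ H) as [n Hn].
  eapply D_cons; eauto.
Qed.

Lemma Delta_max G a f : ~ Delta G a f ->
  H_derivable (fun g => Delta G a g \/ g = f) a.
Proof.
  intro Hf. destruct (classic (H_derivable (fun g => D G a (code f) g \/ g = f) a)) as [H|H].
  - eapply mono; [|exact H]. intros g [Hg|Hg]; [left; exists (code f)|right]; auto.
  - exfalso; apply Hf. exists (S (code f)). simpl. right; auto.
Qed.

Lemma Delta_sup G a f : G f -> Delta G a f.
Proof. intro; exists 0; auto. Qed.

Definition relmax (X : formula -> Prop) a :=
  ~ H_derivable X a /\
  forall f, ~ X f -> H_derivable (fun g => X g \/ g = f) a.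

Lemma rm_closed X a f : relmax X a -> H_derivable X f -> X f.
Proof.
  intros [H1 H2] Hf. apply NNPP; intro Hn.
  apply H1. eapply d_mp; [exact Hf|]. apply deduction, H2, Hn.
Qed.

Lemma rm_ax X a f : relmax X a -> H_axiom f -> X f.
Proof. intros R H. apply (rm_closed _ _ _ R). apply d_ax; auto. Qed.

Lemma rm_mp X a b c : relmax X a -> X b -> X (Imp b c) -> X c.
Proof.
  intros R H1 H2. apply (rm_closed _ _ _ R).
  apply (d_mp _ b c); apply d_prem; auto.
Qed.

Lemma rm_and X a b c : relmax X a -> (X (And b c) <-> X b /\ X c).
Proof.
  intro R; split.
  - intro H; split; eapply rm_mp; eauto; apply (rm_ax _ _ _ R); left; constructor.
  - intros [H1 H2]. eapply rm_mp; [eauto| |]. exact H2.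
    eapply rm_mp; [eauto|exact H1|]. apply (rm_ax _ _ _ R); left; constructor.
Qed.

Lemma rm_or X a b c : relmax X a -> (X (Or b c) <-> X b \/ X c).
Proof.
  intro R; split.
  - intro H. apply NNPP; intro Hn. destruct R as [R1 R2].
    apply R1. eapply d_mp. apply d_prem; exact H.
    eapply mp2; [apply deduction, R2 | apply deduction, R2 | apply dmbc, Ax8]; tauto.
  - intros [H|H]; eapply rm_mp; eauto; apply (rm_ax _ _ _ R); left; constructor.
Qed.

Lemma rm_imp X a b c : relmax X a -> (X (Imp b c) <-> ~ X b \/ X c).
Proof.
  intro R; split.
  - intro H. destruct (classic (X b)); [right; eapply rm_mp; eauto | left; auto].
  - intros [H|H].
    + assert (X (Or b (Imp b c))) by (apply (rm_ax _ _ _ R); left; constructor).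
      apply (rm_or _ _ _ _ R) in H0. tauto.
    + eapply rm_mp; eauto. apply (rm_ax _ _ _ R); left; constructor.
Qed.

Lemma rm_iff X a b c : relmax X a -> X (Iff b c) -> (X b <-> X c).
Proof.
  intros R H. unfold Iff in H. apply (rm_and _ _ _ _ R) in H. destruct H.
  split; intro; eapply rm_mp; eauto.
Qed.

Lemma rm_L0 X a b : relmax X a -> ~ X b -> X (Neg b).
Proof.
  intros R H. assert (X (Or b (Neg b))) by (apply (rm_ax _ _ _ R); left; constructor).
  apply (rm_or _ _ _ _ R) in H0. tauto.
Qed.

Lemma rm_bc X a b : relmax X a -> X (Circ b) -> X b -> X (Neg b) -> False.
Proof.
  intros R H1 H2 H3. destruct R as [R1 R2]. apply R1.
  eapply d_mp; [apply d_prem; exact H3|].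
  eapply d_mp; [apply d_prem; exact H2|].
  eapply d_mp; [apply d_prem; exact H1|]. apply dmbc, bc1.
Qed.

Lemma rm_L1 X a b : relmax X a -> (X (Circ b) <-> ~ (X b /\ X (Neg b))).
Proof.
  intro R; split.
  - intros H [H1 H2]. eapply rm_bc; eauto.
  - intro H. assert (X (Or (Circ b) (And b (Neg b)))) by (apply (rm_ax _ _ _ R); right; left; constructor).
    apply (rm_or _ _ _ _ R) in H0. rewrite (rm_and _ _ _ _ R) in H0. tauto.
Qed.

Lemma rm_L2 X a b : relmax X a -> (X (Neg (Circ b)) <-> ~ X (Circ b)).
Proof.
  intro R; split.
  - intros H H1. apply (rm_bc X a (Circ b) R); auto. apply (rm_ax _ _ _ R); right; right; constructor.
  - apply rm_L0 with a; auto.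
Qed.

Lemma rm_L3 X a b : relmax X a -> (X (Neg (Neg b)) <-> X b).
Proof.
  intro R; split; intro; eapply rm_mp; eauto; apply (rm_ax _ _ _ R); right; left; constructor.
Qed.

Definition good (X : formula -> Prop) (f : formula) (x : V3) : Prop :=
  match x with
  | V1 => X f /\ ~ X (Neg f)
  | Vhalf => X f /\ X (Neg f)
  | V0 => ~ X f
  end.

Definition cval (X : formula -> Prop) (n : nat) : V3 :=
  if excluded_middle_informative (X (Var n)) then
    (if excluded_middle_informative (X (Neg (Var n))) then Vhalf else V1)
  else V0.

Lemma truth X a f : relmax X a -> good X f (eval (cval X) f).
Proof.
  intro R. induction f; simpl.
  - unfold cval. destruct (excluded_middle_informative (X (Var n)));
    [destruct (excluded_middle_informative (X (Neg (Var n))))|]; simpl; auto.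
  - pose proof (rm_L3 _ _ f R). pose proof (rm_L0 _ _ f R).
    destruct (eval (cval X) f); simpl in *; tauto.
  - pose proof (rm_L1 _ _ f R). pose proof (rm_L2 _ _ f R). pose proof (rm_L0 _ _ f R).
    destruct (eval (cval X) f); simpl in *; tauto.
  - pose proof (rm_and _ _ f1 f2 R).
    pose proof (rm_iff _ _ _ _ R (rm_ax _ _ _ R (or_intror (or_introl (A1 f1 f2))))).
    pose proof (rm_or _ _ (Neg f1) (Neg f2) R).
    pose proof (rm_L0 _ _ f1 R). pose proof (rm_L0 _ _ f2 R).
    destruct (eval (cval X) f1), (eval (cval X) f2); simpl in *; tauto.
  - pose proof (rm_or _ _ f1 f2 R).
    pose proof (rm_iff _ _ _ _ R (rm_ax _ _ _ R (or_intror (or_introl (A2 f1 f2))))).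
    pose proof (rm_and _ _ (Neg f1) (Neg f2) R).
    pose proof (rm_L0 _ _ f1 R). pose proof (rm_L0 _ _ f2 R).
    destruct (eval (cval X) f1), (eval (cval X) f2); simpl in *; tauto.
  - pose proof (rm_imp _ _ f1 f2 R).
    pose proof (rm_iff _ _ _ _ R (rm_ax _ _ _ R (or_intror (or_introl (A3 f1 f2))))).
    unfold Sim in *.
    pose proof (rm_and _ _ (Neg f2) (Or (And (Neg (Neg f1)) (Circ (Neg f1))) (Neg (Circ f1))) R).
    pose proof (rm_or _ _ (And (Neg (Neg f1)) (Circ (Neg f1))) (Neg (Circ f1)) R).
    pose proof (rm_and _ _ (Neg (Neg f1)) (Circ (Neg f1)) R).
    pose proof (rm_L3 _ _ f1 R).
    pose proof (rm_L1 _ _ f1 R). pose proof (rm_L2 _ _ f1 R).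
    pose proof (rm_L1 _ _ (Neg f1) R).
    pose proof (rm_L0 _ _ f1 R). pose proof (rm_L0 _ _ f2 R).
    destruct (eval (cval X) f1), (eval (cval X) f2); simpl in *; tauto.
Qed.

Theorem corollary1 (Gamma : formula -> Prop) (a : formula) :
  H_derivable Gamma a <-> LFI1_consequence Gamma a.
Proof.
  split; [apply soundness|].
  intro Hc. apply NNPP; intro Hn.
  assert (R : relmax (Delta Gamma a) a).
  { split. apply Delta_cons; auto. intros; apply Delta_max; auto. }
  pose proof (truth _ _ a R) as T.
  assert (Ha : ~ Delta Gamma a a).
  { intro H. apply (proj1 R). apply d_prem; auto. }
  specialize (Hc (cval (Delta Gamma a))).
  assert (designated (eval (cval (Delta Gamma a)) a)).
  { apply Hc. intros g Hg. pose proof (truth _ _ g R) as Tg.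
    assert (Delta Gamma a g) by (apply Delta_sup; auto).
    unfold designated. destruct (eval (cval (Delta Gamma a)) g); simpl in Tg; tauto. }
  unfold designated in H. destruct (eval (cval (Delta Gamma a)) a); simpl in T;
  destruct H; try discriminate; tauto.
Qed.
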